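(* For every $n\ge1$ and every unlabeled binary tree $T\in\mathrm{URL}_n$, there exists a bijection $\Omega$ from $\mathrm{RS}(T)$ to $\mathrm{And}^{II}(T)$.
   Context: A binary tree is a rooted tree in which every vertex has no child, a single left child, a single right child, or both. The map $\Psi$ sends a word $\pi$ of distinct integers to an increasing binary tree: $\Psi(\emptyset)=\emptyset$; otherwise write $\pi=\sigma\, i\,\tau$ with $i$ the least letter, and let $\Psi(\pi)$ have root $i$, left subtree $\Psi(\sigma)$, right subtree $\Psi(\tau)$. The shape of a labeled tree is its underlying unlabeled binary tree. $\mathrm{URL}_n$ is the set of unlabeled rooted binary trees with $n$ vertices in which no vertex has a left child but no right child. Andr\'e II permutations: the empty word and one-letter words are Andr\'e II; a word $\sigma$ of $n\ge2$ distinct integers, written $\sigma=\tau\,\min(\sigma)\,\tau'$, is Andr\'e II if $\tau,\tau'$ are Andr\'e II and the smallest letter of $\tau\tau'$ lies in $\tau'$. A permutation $\sigma$ of $[n]$ is simsun if $\sigma_n=n$ and for each $k\in[n]$ the subword formed by the letters $1,\dots,k$ has no index $i$ with $w_i>w_{i+1}>w_{i+2}$. $\mathrm{RS}(T)$ (resp. $\mathrm{And}^{II}(T)$) is the set of simsun (resp. Andr\'e II) permutations $\sigma$ of $[n]$ with $\mathrm{shape}(\Psi(\sigma))=T$. *)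

(* Defs.v *)
From mathcomp Require Import all_boot.
Set Implicit Arguments. Unset Strict Implicit. Unset Printing Implicit Defensive.

(* Unlabeled binary trees; [Leaf] is the empty tree, [Node l r] a vertex
   with left subtree l and right subtree r (empty subtree = no child). *)
Inductive btree := Leaf | Node of btree & btree.

Fixpoint bsize (t : btree) : nat :=
  match t with Leaf => 0 | Node l r => (bsize l + bsize r).+1 end.

Fixpoint no_left_only (t : btree) : bool :=
  match t with
  | Leaf => true
  | Node (Node _ _) Leaf => false
  | Node l r => no_left_only l && no_left_only r
  end.

Definition URL (n : nat) (t : btree) : Prop := bsize t = n /\ no_left_only t.

Inductive ltree := LLeaf | LNode of ltree & nat & ltree.

Fixpoint tshape (t : ltree) : btree :=
  match t with LLeaf => Leaf | LNode l _ r => Node (tshape l) (tshape r) end.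

Definition minw (s : seq nat) : nat := foldr minn (head 0 s) s.
Definition lpart (s : seq nat) : seq nat := take (index (minw s) s) s.
Definition rpart (s : seq nat) : seq nat := drop (index (minw s) s).+1 s.

(* Psi, with fuel (fuel = size of the word suffices) *)
Fixpoint Psi_aux (fuel : nat) (s : seq nat) : ltree :=
  match fuel with
  | 0 => LLeaf
  | f.+1 => if s is [::] then LLeaf
            else LNode (Psi_aux f (lpart s)) (minw s) (Psi_aux f (rpart s))
  end.
Definition Psi (s : seq nat) : ltree := Psi_aux (size s) s.

Fixpoint andre2_aux (fuel : nat) (s : seq nat) : bool :=
  match fuel with
  | 0 => size s <= 1
  | f.+1 => if size s <= 1 then true
            else [&& andre2_aux f (lpart s), andre2_aux f (rpart s)
                  & minw (lpart s ++ rpart s) \in rpart s]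
  end.
Definition andre2 (s : seq nat) : bool := andre2_aux (size s) s.

Definition is_perm (n : nat) (s : seq nat) : bool := perm_eq s (iota 1 n).

Definition no_double_descent (w : seq nat) : bool :=
  all (fun i => ~~ ((nth 0 w i > nth 0 w i.+1) && (nth 0 w i.+1 > nth 0 w i.+2)))
      (iota 0 (size w - 2)).

Definition simsun (n : nat) (s : seq nat) : bool :=
  [&& is_perm n s, last 0 s == n &
      all (fun k => no_double_descent [seq x <- s | x <= k]) (iota 1 n)].

Definition RS (T : btree) (s : seq nat) : Prop :=
  simsun (bsize T) s /\ tshape (Psi s) = T.

Definition AndII (T : btree) (s : seq nat) : Prop :=
  [/\ is_perm (bsize T) s, andre2 s & tshape (Psi s) = T].

(* Main.v *)
Require Import Defs.
From mathcomp Require Import all_boot.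
From mathcomp Require Import zify.
Set Implicit Arguments. Unset Strict Implicit. Unset Printing Implicit Defensive.

Lemma foldr_minn_le d s x : x \in s -> foldr minn d s <= x.
Proof.
elim: s => [|y s IH] //=; rewrite in_cons => /orP [/eqP ->|/IH H].
  exact: geq_minl.
by rewrite geq_min H orbT.
Qed.

Lemma foldr_minn_mem d s : foldr minn d s \in d :: s.
Proof.
elim: s => [|y s IH] /=; first by rewrite mem_head.
rewrite /minn; case: ifP => _; first by rewrite !inE eqxx orbT.
move: IH; rewrite !inE => /orP [->|->] //; by rewrite !orbT.
Qed.

Lemma minw_mem s : s != [::] -> minw s \in s.
Proof.
case: s => [|y s] // _; have := foldr_minn_mem y (y :: s).
by rewrite /minw /= in_cons => /orP [/eqP ->|] //; rewrite mem_head.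
Qed.

Lemma minw_le s x : x \in s -> minw s <= x.
Proof. exact: foldr_minn_le. Qed.

Lemma minw_eq s m : m \in s -> (forall x, x \in s -> m <= x) -> minw s = m.
Proof.
move=> ms H; apply/eqP; rewrite eqn_leq minw_le // H //.
by apply: minw_mem; move: ms; case: (s).
Qed.

Lemma dec s a t : all (fun x => a < x) (s ++ t) ->
  [/\ minw (s ++ a :: t) = a, lpart (s ++ a :: t) = s & rpart (s ++ a :: t) = t].
Proof.
move=> /allP H.
have Hm : minw (s ++ a :: t) = a.
  apply: minw_eq; first by rewrite mem_cat mem_head orbT.
  move=> x; rewrite mem_cat in_cons => /orP [xs|/orP [/eqP ->//|xt]].
    by apply: ltnW; apply: H; rewrite mem_cat xs.
  by apply: ltnW; apply: H; rewrite mem_cat xt orbT.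
have Hi : index a (s ++ a :: t) = size s.
  rewrite index_cat; case: ifP => [as_|_]; last by rewrite /= eqxx addn0.
  by have := H a; rewrite mem_cat as_ ltnn => /(_ isT).
split => //; rewrite /lpart /rpart Hm Hi.
  by rewrite take_size_cat.
rewrite drop_cat; case: ifP => [|_]; first by rewrite ltnNge leqnSn.
by rewrite subSnn /= drop0.
Qed.

Lemma exist_dec s : uniq s -> s != [::] ->
  exists l a r, s = l ++ a :: r /\ all (fun x => a < x) (l ++ r).
Proof.
move=> us ns; set a := minw s.
have am : a \in s by apply: minw_mem.
have Hs : s = take (index a s) s ++ a :: drop (index a s).+1 s.
  by rewrite -[X in _ ++ X :: _](nth_index 0 am) -drop_nth ?index_mem // cat_take_drop.
exists (take (index a s) s), a, (drop (index a s).+1 s); split => //.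
apply/allP => x xin.
have xs : x \in s.
  by rewrite Hs mem_cat in_cons; move: xin; rewrite mem_cat => /orP [->|->]; rewrite ?orbT.
rewrite ltn_neqAle minw_le // andbT; apply/eqP => ax; move: us; rewrite Hs cat_uniq /= => /and4P [_ /norP [H1 _] H2 _].
by move: xin; rewrite mem_cat -ax (negbTE H1) (negbTE H2).
Qed.

Lemma size_lpart s : s != [::] -> size (lpart s) < size s.
Proof.
move=> ns; rewrite /lpart size_take; have := minw_mem ns; rewrite -index_mem.
by move=> H; rewrite H.
Qed.

Lemma size_rpart s : s != [::] -> size (rpart s) < size s.
Proof.
move=> ns; rewrite /rpart size_drop; have := minw_mem ns; rewrite -index_mem.
case: (size s) => // n _; rewrite subSS; exact: leq_ltn_trans (leq_subr _ _) (ltnSn n).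
Qed.

Lemma Psi_fuel f g s : size s <= f -> size s <= g -> Psi_aux f s = Psi_aux g s.
Proof.
elim: f g s => [|f IH] [|g] s //=; try by case: s.
case: s => // x s' Hf Hg; set s := x :: s'.
have ns : s != [::] by [].
have Hl := size_lpart ns; have Hr := size_rpart ns.
by rewrite (IH g) ?(IH g (rpart s)) //; rewrite -ltnS; apply: leq_trans _ ; eauto.
Qed.

Lemma all_cat_gt a s t : all (fun x => a < x) (s ++ t) ->
  all (fun x => a < x) s /\ all (fun x => a < x) t.
Proof. by rewrite all_cat => /andP. Qed.

Lemma Psi_cat s a t : all (fun x => a < x) (s ++ t) ->
  Psi (s ++ a :: t) = LNode (Psi s) a (Psi t).
Proof.
move=> H; have [Hm Hl Hr] := dec H.
rewrite /Psi size_cat /= addnS.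
have E : forall f u, u != [::] -> Psi_aux f.+1 u = LNode (Psi_aux f (lpart u)) (minw u) (Psi_aux f (rpart u)).
  by move=> f [].
rewrite E; last by case: (s).
rewrite Hm Hl Hr; congr LNode; apply: Psi_fuel => //.
- by rewrite leq_addr.
- by rewrite leq_addl.
Qed.

Lemma andre2_fuel f g s : size s <= f -> size s <= g -> andre2_aux f s = andre2_aux g s.
Proof.
elim: f g s => [|f IH] [|g] s //=.
- by move=> H _; rewrite (leq_trans H).
- by move=> _ H; rewrite (leq_trans H).
case: ifP => // Hs Hf Hg.
have ns : s != [::] by case: (s) Hs.
have Hl := size_lpart ns; have Hr := size_rpart ns.
by rewrite (IH g) ?(IH g (rpart s)) //; rewrite -ltnS; apply: leq_trans _ ; eauto.
Qed.

Lemma andre2_cat s a t : all (fun x => a < x) (s ++ t) ->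
  andre2 (s ++ a :: t) =
  (s ++ t == [::]) || [&& andre2 s, andre2 t & minw (s ++ t) \in t].
Proof.
move=> H; have [Hm Hl Hr] := dec H.
rewrite /andre2 size_cat /= addnS /= Hl Hr size_cat /= addnS ltnS.
rewrite (@andre2_fuel _ (size s) s) ?leq_addr // (@andre2_fuel _ (size t) t) ?leq_addl //.
by case: (s) (t) => [|x s'] [|y t'].
Qed.

Lemma minw_map_succ s : s != [::] -> minw (map succn s) = (minw s).+1.
Proof.
move=> ns; apply: minw_eq; first by rewrite map_f // minw_mem.
by move=> x /mapP [y ys ->]; rewrite ltnS minw_le.
Qed.

Lemma lpart_map_succ s : lpart (map succn s) = map succn (lpart s).
Proof.
case: s => [|x s] //; rewrite /lpart minw_map_succ // index_map //; last exact: succn_inj.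
by rewrite map_take.
Qed.

Lemma rpart_map_succ s : rpart (map succn s) = map succn (rpart s).
Proof.
case: s => [|x s] //; rewrite /rpart minw_map_succ // index_map //; last exact: succn_inj.
by rewrite map_drop.
Qed.

Lemma Psi_aux_map_succ f s : tshape (Psi_aux f (map succn s)) = tshape (Psi_aux f s).
Proof.
elim: f s => [|f IH] [|x s] //=.
by rewrite -map_cons lpart_map_succ rpart_map_succ !IH.
Qed.

Lemma andre2_aux_map_succ f s : andre2_aux f (map succn s) = andre2_aux f s.
Proof.
elim: f s => [|f IH] s /=; rewrite size_map //.
case: ifP => // _; rewrite lpart_map_succ rpart_map_succ !IH -map_cat.
case E: (lpart s ++ rpart s) => [|y u].
  have R : rpart s = [::] by move: E; case: (lpart s); case: (rpart s).
  by rewrite R.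
by rewrite -E minw_map_succ ?E // mem_map //; exact: succn_inj.
Qed.

Definition sh s := tshape (Psi s).

Lemma sh_map_succ s : sh (map succn s) = sh s.
Proof. by rewrite /sh /Psi size_map Psi_aux_map_succ. Qed.

Lemma andre2_map_succ s : andre2 (map succn s) = andre2 s.
Proof. by rewrite /andre2 size_map andre2_aux_map_succ. Qed.

Lemma sh_cat s a t : all (fun x => a < x) (s ++ t) ->
  sh (s ++ a :: t) = Node (sh s) (sh t).
Proof. by move=> H; rewrite /sh Psi_cat. Qed.

Definition dd (x : nat) (t : seq nat) : bool :=
  if t is y :: z :: _ then (y < x) && (z < y) else false.

Fixpoint ndd (w : seq nat) : bool :=
  if w is x :: t then ~~ dd x t && ndd t else true.

Lemma nddE w : no_double_descent w = ndd w.
Proof.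
elim: w => [|x w IH] //; case: w IH => [|y [|z r]] IH //.
rewrite -[ndd (x :: _)]/(~~ dd x [:: y, z & r] && ndd [:: y, z & r]) -IH /no_double_descent /=; congr andb.
rewrite !subSS subn0 -[1]/(1 + 0) iotaDl all_map; apply: eq_all => i /=.
by [].
Qed.

Lemma ndd_L1 u b c v : b < c ->
  ndd (u ++ b :: c :: v) = ndd (rcons u b) && ndd (c :: v).
Proof.
move=> bc; elim: u => [|x u IH].
  by rewrite /= [c < b]ltnNge (ltnW bc); case: v.
rewrite /= IH andbA; congr (_ && _ && _).
case: u {IH} => [|y [|z u]] //=.
by rewrite [c < b]ltnNge (ltnW bc) andbF.
Qed.

Lemma ndd_suffix u v : ndd (u ++ v) -> ndd v.
Proof. by elim: u => //= x u IH /andP [_ /IH]. Qed.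

Definition F k (w : seq nat) := filter (fun x => x <= k) w.

Lemma F_nil k s : (F k s = [::]) <-> all (fun x => k < x) s.
Proof.
elim: s => [|x s IH] //=; rewrite /F /= ltnNge.
case: (x <= k) => //=; exact: IH.
Qed.

Lemma N_cat s a t k : all (fun x => a < x) (s ++ t) ->
  ndd (F k (s ++ a :: t)) = ndd (rcons (F k s) a) && ndd (F k t).
Proof.
move=> /all_cat_gt [Hs Ht]; rewrite /F filter_cat /=.
case: (leqP a k) => ak.
  case E: (filter _ t) => [|d v]; first by rewrite cats1 andbT.
  rewrite ndd_L1 //.
  have : d \in filter (fun x => x <= k) t by rewrite E mem_head.
  by rewrite mem_filter => /andP [_ dt]; move/allP: Ht => /(_ d dt).
have [-> ->] : filter (fun x => x <= k) s = [::] /\ filter (fun x => x <= k) t = [::].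
  split; apply/F_nil; apply/allP => x xin.
  - by move/allP: Hs => /(_ x xin) /ltnW; apply: leq_trans ak.
  - by move/allP: Ht => /(_ x xin) /ltnW; apply: leq_trans ak.
by [].
Qed.

Lemma ndd_end u a c : c < a -> all (fun x => a < x) u ->
  ndd (u ++ [:: a; c]) = (u == [::]).
Proof.
case/lastP: u => [|u x] ca; first by [].
rewrite all_rcons => /andP [ax _]; rewrite cat_rcons; have -> : (rcons u x == [::]) = false by case: (u).
apply/negP.
move/ndd_suffix; by rewrite /= ax ca.
Qed.

Lemma F_gt k s a : k < a -> all (fun x => a < x) s -> F k s = [::].
Proof.
move=> ka H; apply/F_nil; apply/allP => x xin.
by move/allP: H => /(_ x xin) /ltnW; apply: leq_trans ka.
Qed.

Lemma Dc_cat_k s a t c k : c < a -> all (fun x => a < x) (s ++ t) ->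
  ndd (rcons (F k (s ++ a :: t)) c) =
  [&& ndd (rcons (F k s) a), ndd (rcons (F k t) c) & (F k t != [::]) || (F k s == [::])].
Proof.
move=> ca H; have [Hs Ht] := all_cat_gt H.
case: (leqP a k) => ak; last first.
  rewrite /F filter_cat /= leqNgt ak /=.
  have := F_gt ak Hs; have := F_gt ak Ht; rewrite /F => -> -> /=.
  by [].
rewrite {1}/F filter_cat /= ak rcons_cat rcons_cons -/(F k s) -/(F k t).
case E: (F k t) => [|d v].
  rewrite /= ndd_end //; last by apply/allP => x; rewrite mem_filter => /andP [_ /(allP Hs)].
  by case: (F k s) => //= ? ?; rewrite andbF.
rewrite rcons_cons ndd_L1; first by rewrite /= andbT.
have : d \in F k t by rewrite E mem_head.
by rewrite mem_filter => /andP [_ /(allP Ht)].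
Qed.

Definition Dc c w := forall k, ndd (rcons (F k w) c).

Lemma cond_equiv s t : s ++ t != [::] ->
  (minw (s ++ t) \in t) <-> (forall k, F k t = [::] -> F k s = [::]).
Proof.
move=> ne; set m := minw (s ++ t); split.
  move=> mt k /F_nil /allP Ht; apply/F_nil/allP => x xs.
  apply: (leq_trans (Ht m mt)); apply: minw_le; by rewrite mem_cat xs.
move=> C; case: (boolP (m \in t)) => // mnt.
have : m \in s ++ t by apply: minw_mem.
rewrite mem_cat (negbTE mnt) orbF => ms.
have Fs : F m s != [::].
  apply/eqP => E; have : m \in F m s by rewrite mem_filter leqnn ms.
  by rewrite E.
case E: (F m t) => [|d v]; first by rewrite (C m E) in Fs.
have : d \in F m t by rewrite E mem_head.
rewrite mem_filter => /andP [dm dt].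
have md : m <= d by apply: minw_le; rewrite mem_cat dt orbT.
have e : d = m by apply/eqP; rewrite eqn_leq md dm.
by move: dt; rewrite e (negbTE mnt).
Qed.

Lemma Dc_cat s a t c : c < a -> all (fun x => a < x) (s ++ t) ->
  Dc c (s ++ a :: t) <-> [/\ Dc a s, Dc c t & forall k, F k t = [::] -> F k s = [::]].
Proof.
move=> ca H; split.
  move=> D; split.
  - by move=> k; have := D k; rewrite Dc_cat_k // => /and3P [].
  - by move=> k; have := D k; rewrite Dc_cat_k // => /and3P [].
  - move=> k E; have := D k; rewrite Dc_cat_k // E /= => /andP [_ /eqP //].
move=> [Ds Dt C] k; rewrite Dc_cat_k //; apply/and3P; split => //.
by case E: (F k t) => [|d v] //=; rewrite (C k E).
Qed.

Lemma AD n : forall w, size w <= n -> uniq w -> forall c, all (fun x => c < x) w ->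
  (andre2 w <-> Dc c w).
Proof.
elim: n => [|n IH] w Hw uw c Hc.
  by move: Hw; rewrite leqn0 size_eq0 => /eqP ->; split => // _ k.
case: (altP (w =P [::])) => [->|nw]; first by split => // _ k.
have [s [a [t [Ew H]]]] := exist_dec uw nw.
move: Hw uw Hc; rewrite Ew => Hw uw Hc.
have ca : c < a by move/allP: Hc; apply; rewrite mem_cat mem_head orbT.
have [Hs Ht] := all_cat_gt H.
move: (uw); rewrite cat_uniq /= => /and4P [us _ _ ut].
move: Hw; rewrite size_cat /= addnS ltnS => Hw.
have IHs := IH s (leq_trans (leq_addr _ _) Hw) us a Hs.
have Ht' : all (fun x => c < x) t.
  by apply/allP => x /(allP Ht) ax; apply: ltn_trans ax.
have IHt := IH t (leq_trans (leq_addl _ _) Hw) ut c Ht'.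
rewrite andre2_cat //; apply: iff_trans (iff_sym (Dc_cat ca H)).
case: (altP (s ++ t =P [::])) => [E|ne].
  have [-> ->] : s = [::] /\ t = [::] by move: E; case: (s); case: (t).
  by split => // _; split => // k; rewrite /=.
rewrite /=; split.
  move=> /and3P [As At mt]; split; [exact/IHs | exact/IHt | exact/(cond_equiv ne)].
move=> [Ds Dt C]; apply/and3P; split; [exact/IHs | exact/IHt | exact/(cond_equiv ne)].
Qed.

Lemma AD' w c : uniq w -> all (fun x => c < x) w -> (andre2 w <-> Dc c w).
Proof. by move=> uw Hc; apply: (AD (leqnn (size w)) uw Hc). Qed.

Lemma dec_ind (P : seq nat -> Prop) :
  P [::] ->
  (forall s a t, all (fun x => a < x) (s ++ t) -> uniq (s ++ a :: t) ->
     P s -> P t -> P (s ++ a :: t)) ->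
  forall w, uniq w -> P w.
Proof.
move=> P0 PS w; move: {2}(size w) (leqnn (size w)) => n.
elim: n w => [|n IH] w Hw uw.
  by move: Hw; rewrite leqn0 size_eq0 => /eqP ->.
case: (altP (w =P [::])) => [->|nw] //.
have [s [a [t [Ew H]]]] := exist_dec uw nw.
move: Hw uw; rewrite Ew => Hw uw.
move: (uw); rewrite cat_uniq /= => /and4P [us _ _ ut].
move: Hw; rewrite size_cat /= addnS ltnS => Hw.
apply: PS => //.
- exact: IH (leq_trans (leq_addr _ _) Hw) us.
- exact: IH (leq_trans (leq_addl _ _) Hw) ut.
Qed.

Definition N w := forall k, ndd (F k w).

Lemma N_cat' s a t : all (fun x => a < x) (s ++ t) ->
  N (s ++ a :: t) <-> Dc a s /\ N t.
Proof.
move=> H; split.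
  by move=> D; split => k; have := D k; rewrite N_cat // => /andP [].
by move=> [Ds Nt] k; rewrite N_cat // Ds Nt.
Qed.

Fixpoint Gf f x s :=
  match f with
  | 0 => [::]
  | f'.+1 => if s is [::] then [::]
             else map succn (lpart s) ++ x :: Gf f' (minw s).+1 (rpart s)
  end.
Definition G x s := Gf (size s) x s.

Lemma Gf_fuel f g x s : size s <= f -> size s <= g -> Gf f x s = Gf g x s.
Proof.
elim: f g x s => [|f IH] [|g] x s //=; try by case: s.
case: s => // z s' Hf Hg; set s := z :: s'.
have ns : s != [::] by [].
have Hl := size_lpart ns; have Hr := size_rpart ns.
by rewrite (IH g) //; rewrite -ltnS; apply: leq_trans _ ; eauto.
Qed.

Lemma G_cat x s a t : all (fun z => a < z) (s ++ t) ->
  G x (s ++ a :: t) = map succn s ++ x :: G a.+1 t.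
Proof.
move=> H; have [Hm Hl Hr] := dec H.
rewrite /G size_cat /= addnS.
have E : forall f u y, u != [::] -> Gf f.+1 y u = map succn (lpart u) ++ y :: Gf f (minw u).+1 (rpart u).
  by move=> f [].
rewrite E; last by case: (s).
by rewrite Hm Hl Hr (@Gf_fuel _ (size t)) // leq_addl.
Qed.

Fixpoint Hf f y s :=
  match f with
  | 0 => [::]
  | f'.+1 => if s is [::] then [::]
             else map predn (lpart s) ++
                  (if rpart s is [::] then y else (minw (rpart s)).-1) :: Hf f' y (rpart s)
  end.
Definition H y s := Hf (size s) y s.

Lemma Hf_fuel f g y s : size s <= f -> size s <= g -> Hf f y s = Hf g y s.
Proof.
elim: f g s => [|f IH] [|g] s //=; try by case: s.
case: s => // z s' Hf Hg; set s := z :: s'.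
have ns : s != [::] by [].
have Hl := size_lpart ns; have Hr := size_rpart ns.
by rewrite (IH g) //; rewrite -ltnS; apply: leq_trans _ ; eauto.
Qed.

Lemma H_cat y s a t : all (fun z => a < z) (s ++ t) ->
  H y (s ++ a :: t) = map predn s ++ (if t is [::] then y else (minw t).-1) :: H y t.
Proof.
move=> Hy; have [Hm Hl Hr] := dec Hy.
rewrite /H size_cat /= addnS.
have E : forall f u, u != [::] -> Hf f.+1 y u = map predn (lpart u) ++
   (if rpart u is [::] then y else (minw (rpart u)).-1) :: Hf f y (rpart u).
  by move=> f [].
rewrite E; last by case: (s).
by rewrite Hl Hr (@Hf_fuel _ (size t)) // leq_addl.
Qed.

Lemma G_nil x : G x [::] = [::].
Proof. by []. Qed.

Lemma GL w : uniq w -> forall x, all (fun z => x <= z) w -> all (fun z => x <= z) (G x w).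
Proof.
move: w; apply: dec_ind => // s a t H _ IHs IHt x; rewrite G_cat //.
rewrite all_cat /= => /andP [Hxs /andP [xa Hxt]].
have [Hs Ht] := all_cat_gt H.
rewrite all_cat /= leqnn /=; apply/andP; split.
  apply/allP => z /mapP [u us ->]; move/allP: Hs => /(_ u us) au.
  by apply: leq_trans xa (leq_trans (ltnW au) (leqnSn _)).
have := IHt a.+1 Ht; move/allP => Hg; apply/allP => z zin.
by apply: leq_trans xa (ltnW (Hg z zin)).
Qed.

Lemma G_mem w x : uniq w -> w != [::] -> x \in G x w.
Proof.
move=> uw nw; have [s [a [t [-> H]]]] := exist_dec uw nw.
by rewrite G_cat // mem_cat mem_head orbT.
Qed.

Lemma uniq_cat_parts (s : seq nat) a t : uniq (s ++ a :: t) -> uniq s /\ uniq t.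
Proof. by rewrite cat_uniq /= => /and4P [us _ _ ut]. Qed.

Lemma sh_G w : uniq w -> forall x, all (fun z => x <= z) w -> sh (G x w) = sh w.
Proof.
move: w; apply: dec_ind => // s a t H uw IHs IHt x Hx; rewrite G_cat //.
have [Hs Ht] := all_cat_gt H.
have [us ut] := uniq_cat_parts uw.
move: Hx; rewrite all_cat /= => /andP [_ /andP [xa _]].
rewrite sh_cat ?sh_map_succ ?IHt ?sh_cat //.
rewrite all_cat; apply/andP; split.
  apply/allP => z /mapP [u us' ->]; move/allP: Hs => /(_ u us') au.
  by rewrite ltnS; apply: leq_trans xa (ltnW au).
have := GL ut Ht; move/allP => Hg; apply/allP => z zin.
by apply: leq_trans _ (Hg z zin); rewrite ltnS.
Qed.

Lemma count_cons' (T : Type) (p : pred T) x s : count p (x :: s) = p x + count p s.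
Proof. by []. Qed.

Lemma perm_G w : uniq w -> forall x, w != [::] ->
  perm_eq (rcons (G x w) (last 0 w).+1) (x :: map succn w).
Proof.
move: w; apply: dec_ind => // s a t H uw IHs IHt x _; rewrite G_cat // last_cat /=.
apply/permP => p.
case: t H uw IHt => [|u v] H uw IHt.
  rewrite G_nil /= -!cats1 !count_cat /= map_cat count_cat /=; lia.
have := IHt a.+1 isT; move/permP => /(_ p).
rewrite -!cats1 !count_cat !count_cons' map_cat count_cat map_cons count_cons' count_cat !count_cons'.
have -> : last 0 (u :: v) = last u v by [].
lia.
Qed.

Definition SS w := N w /\ all (fun z => z <= last 0 w) w.

Lemma SS_cat s a t : all (fun x => a < x) (s ++ t) -> SS (s ++ a :: t) ->
  [/\ Dc a s, (t = [::] -> s = [::]) & SS t].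
Proof.
move=> H [Nw Lw]; have [Ds Nt] := (N_cat' H).1 Nw.
have [Hs Ht] := all_cat_gt H.
move: Lw; rewrite last_cat /= all_cat /= => /and3P [Ls La Lt].
split => //.
  move=> Et; move: Ls Hs; rewrite Et /=; case: (s) => // z s' /= /andP [za _] /andP [az _].
  by move: (leq_trans az za); rewrite ltnn.
split => //; case: (t) Lt => //.
Qed.

Lemma G_cat_gt x s a t : x <= a -> all (fun z => a < z) (s ++ t) -> uniq t ->
  all (fun z => x < z) (map succn s ++ G a.+1 t).
Proof.
move=> xa H ut; have [Hs Ht] := all_cat_gt H.
rewrite all_cat; apply/andP; split.
  apply/allP => z /mapP [u us' ->]; move/allP: Hs => /(_ u us') au.
  by rewrite ltnS; apply: leq_trans xa (ltnW au).
have := GL ut Ht; move/allP => Hg; apply/allP => z zin.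
by apply: leq_trans _ (Hg z zin); rewrite ltnS.
Qed.

Lemma andre2_G w : uniq w -> forall x, all (fun z => x <= z) w -> SS w -> andre2 (G x w).
Proof.
move: w; apply: dec_ind => // s a t H uw IHs IHt x Hx Sw.
have [Hs Ht] := all_cat_gt H.
have [us ut] := uniq_cat_parts uw.
move: (Hx); rewrite all_cat /= => /andP [_ /andP [xa _]].
have [Ds Es St] := SS_cat H Sw.
rewrite G_cat // andre2_cat; last exact: G_cat_gt.
case: (altP (t =P [::])) => [Et|nt].
  by rewrite (Es Et) Et.
apply/orP; right; apply/and3P; split.
- by rewrite andre2_map_succ; apply/(AD' us Hs).
- by apply: IHt => //; apply/allP => z /(allP Ht).
rewrite (@minw_eq _ a.+1).
- exact: G_mem.
- by rewrite mem_cat G_mem // orbT.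
move=> z; have := G_cat_gt (leqnn a) H ut; move/allP => /(_ z) h zin.
exact: h.
Qed.

Lemma disj (s : seq nat) a t z : uniq (s ++ a :: t) -> z \in s -> z \notin t.
Proof.
rewrite cat_uniq => /and3P [_ Hd _] zs; apply/negP => zt.
by move/hasP: Hd; apply; exists z => //; rewrite in_cons zt orbT.
Qed.

Lemma andre_dec s a t : all (fun x => a < x) (s ++ t) -> uniq (s ++ a :: t) ->
  andre2 (s ++ a :: t) ->
  (s = [::] /\ t = [::]) \/ [/\ t != [::], andre2 s, andre2 t & all (fun z => minw t < z) s].
Proof.
move=> H uw; rewrite andre2_cat //.
case: (altP (s ++ t =P [::])) => [E _|ne /= /and3P [As At mt]].
  by left; move: E; case: (s); case: (t).
right; have nt : t != [::] by case: (t) mt.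
split => //; apply/allP => z zs.
have m_le : minw t <= minw (s ++ t) by apply: minw_le.
have le_z : minw (s ++ t) <= z by apply: minw_le; rewrite mem_cat zs.
rewrite ltn_neqAle (leq_trans m_le le_z) andbT; apply/eqP => ez.
have := disj uw zs; rewrite -ez minw_mem //.
Qed.

Lemma H_ne w y : uniq w -> w != [::] -> H y w != [::].
Proof.
move=> uw nw; have [s [a [t [-> Hh]]]] := exist_dec uw nw.
by rewrite H_cat //; case: (map predn s).
Qed.

Lemma HL w : uniq w -> forall y, all (fun z => z <= y) w -> w != [::] ->
  all (fun z => minw w <= z) (H y w).
Proof.
move: w; apply: dec_ind => // s a t Hh uw IHs IHt y Hy _.
have [Hs Ht] := all_cat_gt Hh.
have [us ut] := uniq_cat_parts uw.
have [Hm _ _] := dec Hh.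
rewrite Hm H_cat // all_cat /=; apply/and3P; split.
- by apply/allP => z /mapP [u /(allP Hs) au ->]; lia.
- case: (t) Ht => [|u v] Ht.
    by move/allP: Hy; apply; rewrite mem_cat mem_head orbT.
  have := minw_mem (isT : u :: v != [::]) => /(allP Ht); lia.
case: (altP (t =P [::])) => [->|nt] //.
have : all (fun z => z <= y) t by apply/allP => z zt; move/allP: Hy; apply; rewrite mem_cat in_cons zt !orbT.
move=> Hyt; have := IHt y Hyt nt => /allP Hg; apply/allP => z zin.
have h1 := Hg z zin; have h2 := allP Ht _ (minw_mem nt); clear -h1 h2; lia.
Qed.

Lemma HU w : uniq w -> forall y, all (fun z => z <= y) w -> all (fun z => z <= y) (H y w).
Proof.
move: w; apply: dec_ind => // s a t Hh uw IHs IHt y Hy.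
have [us ut] := uniq_cat_parts uw.
move: (Hy); rewrite all_cat /= => /and3P [Hys Hya Hyt].
rewrite H_cat // all_cat /=; apply/and3P; split.
- by apply/allP => z /mapP [u /(allP Hys) au ->]; lia.
- case: (t) Hyt => [|u v] Hyt //.
  have := minw_mem (isT : u :: v != [::]) => /(allP Hyt); lia.
exact: IHt.
Qed.

Lemma H_last w : uniq w -> forall y, w != [::] -> last 0 (H y w) = y.
Proof.
move: w; apply: dec_ind => // s a t Hh uw IHs IHt y _.
have [us ut] := uniq_cat_parts uw.
rewrite H_cat // last_cat /=.
case: (altP (t =P [::])) => [->|nt] //.
have := H_ne y ut nt; have := IHt y nt.
by case: (H y t) => //=; case: (t) nt.
Qed.

Lemma perm_H w : uniq w -> forall y, w != [::] ->
  perm_eq ((minw w).-1 :: H y w) (y :: map predn w).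
Proof.
move: w; apply: dec_ind => // s a t Hh uw IHs IHt y _.
have [us ut] := uniq_cat_parts uw.
have [Hm _ _] := dec Hh.
rewrite Hm H_cat //; apply/permP => p.
case: (altP (t =P [::])) => [->|nt].
  have -> : H y [::] = [::] by [].
  rewrite !count_cons' !(count_cat p) map_cat !(count_cat p) !count_cons' /=; lia.
have := IHt y nt; move/permP => /(_ p).
rewrite !count_cons' => E.
move: E; case: (t) nt => // u v _ E.
rewrite !(count_cat p) map_cat !(count_cat p) !map_cons !count_cons'.
rewrite map_cons count_cons' in E; lia.
Qed.

Lemma succ_pred s : all (fun z => 0 < z) s -> map succn (map predn s) = s.
Proof. by elim: s => //= z s IH /andP [z0 /IH ->]; rewrite prednK. Qed.

Lemma pred_succ s : map predn (map succn s) = s.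
Proof. by elim: s => //= z s ->. Qed.

Lemma pos_of_gt a s : all (fun z => a < z) s -> all (fun z => 0 < z) s.
Proof. by move/allP => H; apply/allP => z /H; lia. Qed.

Lemma andre2_map_pred s : all (fun z => 0 < z) s -> andre2 (map predn s) = andre2 s.
Proof. by move=> Hs; rewrite -{2}(succ_pred Hs) andre2_map_succ. Qed.

Lemma sh_map_pred s : all (fun z => 0 < z) s -> sh (map predn s) = sh s.
Proof. by move=> Hs; rewrite -{2}(succ_pred Hs) sh_map_succ. Qed.

Lemma uniq_map_pred s : all (fun z => 0 < z) s -> uniq s -> uniq (map predn s).
Proof. by move=> Hs; rewrite -{1}(succ_pred Hs) (map_inj_uniq succn_inj). Qed.

Lemma H_step s a t y : all (fun x => a < x) (s ++ t) -> uniq (s ++ a :: t) ->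
  all (fun z => z <= y) (s ++ a :: t) -> t != [::] -> all (fun z => minw t < z) s ->
  all (fun z => (minw t).-1 < z) (map predn s ++ H y t).
Proof.
move=> Hh uw Hy nt Hst.
have [Hs Ht] := all_cat_gt Hh.
have [us ut] := uniq_cat_parts uw.
have mt := minw_mem nt; have := allP Ht _ mt => am.
rewrite all_cat; apply/andP; split.
  by apply/allP => z /mapP [u /(allP Hst) au ->]; clear -am au; lia.
have Hyt : all (fun z => z <= y) t.
  by apply/allP => z zt; move/allP: Hy; apply; rewrite mem_cat in_cons zt !orbT.
have /allP Hg := HL ut Hyt nt; apply/allP => z /Hg h; clear -am h; lia.
Qed.

Lemma if_nonempty (t : seq nat) (y b : nat) : t != [::] -> (if t is [::] then y else b) = b.
Proof. by case: t. Qed.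

Lemma sh_H w : uniq w -> forall y, andre2 w -> all (fun z => z <= y) w -> sh (H y w) = sh w.
Proof.
move: w; apply: dec_ind => // s a t Hh uw IHs IHt y Aw Hy.
have [Hs Ht] := all_cat_gt Hh.
have [us ut] := uniq_cat_parts uw.
case: (andre_dec Hh uw Aw) => [[-> ->] | [nt As At Hst]].
  by rewrite H_cat //= (@sh_cat [::] y [::]) // (@sh_cat [::] a [::]).
have Hyt : all (fun z => z <= y) t.
  by apply/allP => z zt; move/allP: Hy; apply; rewrite mem_cat in_cons zt !orbT.
rewrite H_cat // (if_nonempty y ((minw t).-1) nt) sh_cat; last exact: (H_step Hh uw Hy nt Hst).
by rewrite sh_map_pred ?(pos_of_gt Hs) // IHt // sh_cat.
Qed.

Lemma N_H w : uniq w -> forall y, andre2 w -> all (fun z => z <= y) w -> N (H y w).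
Proof.
move: w; apply: dec_ind => [y _ _ k|s a t Hh uw IHs IHt y Aw Hy] //.
have [Hs Ht] := all_cat_gt Hh.
have [us ut] := uniq_cat_parts uw.
case: (andre_dec Hh uw Aw) => [[-> ->] | [nt As At Hst]].
  by rewrite H_cat //= => k; rewrite /F /=; case: ifP.
have Hyt : all (fun z => z <= y) t.
  by apply/allP => z zt; move/allP: Hy; apply; rewrite mem_cat in_cons zt !orbT.
have Hst' := H_step Hh uw Hy nt Hst.
rewrite H_cat // (if_nonempty y ((minw t).-1) nt); apply/(N_cat' Hst'); split; last exact: IHt.
have [Hps _] := all_cat_gt Hst'.
apply/(AD' _ Hps); first exact: uniq_map_pred (pos_of_gt Hs) us.
by rewrite andre2_map_pred // (pos_of_gt Hs).
Qed.

Lemma G_H w : uniq w -> forall y, andre2 w -> all (fun z => z <= y) w -> G (minw w) (H y w) = w.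
Proof.
move: w; apply: dec_ind => // s a t Hh uw IHs IHt y Aw Hy.
have [Hs Ht] := all_cat_gt Hh.
have [us ut] := uniq_cat_parts uw.
have [Hm _ _] := dec Hh; rewrite Hm.
case: (andre_dec Hh uw Aw) => [[-> ->] | [nt As At Hst]].
  by rewrite H_cat //= (@G_cat a [::] y [::]).
have Hyt : all (fun z => z <= y) t.
  by apply/allP => z zt; move/allP: Hy; apply; rewrite mem_cat in_cons zt !orbT.
have Hst' := H_step Hh uw Hy nt Hst.
rewrite H_cat // (if_nonempty y ((minw t).-1) nt) G_cat // succ_pred ?(pos_of_gt Hs) //.
have := allP Ht _ (minw_mem nt) => am.
have m0 : 0 < minw t by clear -am; lia.
by rewrite prednK // IHt.
Qed.

Lemma H_G w : uniq w -> forall x y, all (fun z => x <= z) w -> y = last 0 w -> H y (G x w) = w.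
Proof.
move: w; apply: dec_ind => // s a t Hh uw IHs IHt x y Hx Ey.
have [Hs Ht] := all_cat_gt Hh.
have [us ut] := uniq_cat_parts uw.
move: (Hx); rewrite all_cat /= => /andP [_ /andP [xa _]].
rewrite G_cat // H_cat; last exact: G_cat_gt.
rewrite pred_succ.
case: (altP (t =P [::])) => [Et|nt].
  by move: Ey; rewrite Et last_cat /= => ->.
have nG : G a.+1 t != [::] by apply/negP => /eqP E; have := G_mem a.+1 ut nt; rewrite E.
rewrite if_nonempty // (@minw_eq _ a.+1) ?G_mem //=; last first.
  by move=> z; have /allP := GL ut Ht; apply.
rewrite IHt //; move: Ey; rewrite last_cat /=.
by case: (t) nt.
Qed.

Lemma iota_succ m n : iota m.+1 n = map succn (iota m n).
Proof. by elim: n m => //= n IH m; rewrite IH. Qed.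

Lemma iota1_succ n : iota 1 n = map succn (iota 0 n).
Proof. by rewrite -[1]/(1 + 0) iotaDl; apply: eq_map => i; rewrite add1n. Qed.

Lemma iota1_rcons n : iota 1 n.+1 = rcons (iota 1 n) n.+1.
Proof. by have := iotaD 1 n 1; rewrite addn1 add1n /= => ->; rewrite cats1. Qed.

Lemma perm_props n s : perm_eq s (iota 1 n) ->
  [/\ uniq s, all (fun z => 1 <= z) s & all (fun z => z <= n) s].
Proof.
move=> P; split.
- by rewrite (perm_uniq P) iota_uniq.
- by apply/allP => z; rewrite (perm_mem P) mem_iota => /andP [].
- by apply/allP => z; rewrite (perm_mem P) mem_iota add1n ltnS => /andP [].
Qed.

Lemma Gok T s : 0 < bsize T -> RS T s -> AndII T (G 1 s).
Proof.
set n := bsize T => n0 [/and3P [Pn /eqP Ln Hk] Sh].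
have [us Hs1 Hsn] := perm_props Pn.
have ns : s != [::] by apply/eqP => E; move/perm_size: Pn; rewrite E size_iota => h; move: n0; rewrite /n -h.
split.
- have := perm_G us 1 ns; rewrite Ln => P.
  have P2 : perm_eq (1 :: map succn s) (rcons (iota 1 n) n.+1).
    rewrite -iota1_rcons (_ : iota 1 n.+1 = 1 :: iota 2 n) // perm_cons iota_succ.
    exact: perm_map Pn.
  have Q := perm_trans P P2.
  move: Q; rewrite perm_rcons perm_sym perm_rcons perm_cons perm_sym; exact.
- apply: andre2_G => //; split.
    move=> k; rewrite -nddE.
    case: (leqP n k) => kn.
      have -> : F k s = F n s.
        apply: eq_in_filter => z /(allP Hsn) zn; rewrite zn (leq_trans zn kn) //.
      by move/allP: Hk; apply; rewrite mem_iota; clear -n0; lia.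
    case: k kn => [|k] kn.
      suff -> : F 0 s = [::] by [].
      by apply/F_nil/allP => z /(allP Hs1).
    by move/allP: Hk; apply; rewrite mem_iota; clear -kn; lia.
  by rewrite Ln.
- by rewrite -Sh; apply: sh_G.
Qed.

Lemma Hok T t : 0 < bsize T -> AndII T t -> RS T (H (bsize T) t).
Proof.
set n := bsize T => n0 [Pn At Sh].
have [ut Ht1 Htn] := perm_props Pn.
have nt : t != [::] by apply/eqP => E; move/perm_size: Pn; rewrite E size_iota => h; move: n0; rewrite /n -h.
have m1 : minw t = 1.
  apply: minw_eq; last by move=> x /(allP Ht1).
  by rewrite (perm_mem Pn) mem_iota leqnn add1n ltnS n0.
split; last by rewrite -Sh; apply: sh_H.
apply/and3P; split.
- have := perm_H ut n nt; rewrite m1 /= => P.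
  have P2 : perm_eq (n :: map predn t) (0 :: iota 1 n).
    apply: (@perm_trans _ (n :: iota 0 n)).
      by rewrite perm_cons -(pred_succ (iota 0 n)) -iota1_succ; apply: perm_map.
    case: (n) n0 => // m _.
    rewrite (_ : iota 0 m.+1 = 0 :: iota 1 m) // iota1_rcons.
    apply/permP => p; rewrite -cats1 !count_cons' count_cat !count_cons'.
    rewrite /= addn0; clear; lia.
  rewrite /is_perm -(perm_cons 0); exact: perm_trans P P2.
- by rewrite H_last.
- apply/allP => k _; rewrite nddE; exact: (N_H ut At Htn).
Qed.

From Stdlib Require Import ProofIrrelevance.

Theorem theorem4p1 (n : nat) (T : btree) :
  1 <= n -> URL n T ->
  exists f : {s : seq nat | RS T s} -> {s : seq nat | AndII T s}, bijective f.
Proof.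
move=> n1 [Hn _].
have T0 : 0 < bsize T by rewrite Hn.
exists (fun s => exist _ (G 1 (sval s)) (Gok T0 (svalP s))).
exists (fun t => exist _ (H (bsize T) (sval t)) (Hok T0 (svalP t))).
- move=> [s Hs] /=; apply: subset_eq_compat.
  case: (Hs) => /and3P [Pn /eqP Ln _] _.
  have [us Hs1 _] := perm_props Pn.
  by apply: H_G => //; rewrite Ln.
- move=> [t Ht] /=; apply: subset_eq_compat.
  case: (Ht) => Pn At _.
  have [ut Ht1 Htn] := perm_props Pn.
  have nt : t != [::].
    by apply/eqP => E; move/perm_size: Pn; rewrite E size_iota => h; move: T0; rewrite -h.
  have m1 : minw t = 1.
    apply: minw_eq; last by move=> x /(allP Ht1).
    by rewrite (perm_mem Pn) mem_iota leqnn add1n ltnS T0.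
  by rewrite -{1}m1; apply: G_H.
Qed.
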